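(* Assume $f$ is differentiable on $\mathbb{R}^m$ with $L$-Lipschitz continuous gradient ($L>0$), and let $\bar q$ be the (unique) minimizer of $f^*$ on $\mathbb{R}^m$. Then for all $k\in\mathbb{N}$, $$\|q_k\|_2\le \sqrt{2L\,(f^*(0)-f^*(\bar q))}+\|\bar q\|_2=:R.$$
   Context: Let $\Omega\subseteq\mathbb{R}^d$ be a nonempty open set, $a_1,\dots,a_m\in\mathcal{C}_0(\Omega)$, and $A^*q=\sum_{i=1}^m q_ia_i$ for $q\in\mathbb{R}^m$. Let $f:\mathbb{R}^m\to\mathbb{R}$ be convex and bounded from below, with convex conjugate $f^*(q)=\sup_y\langle q,y\rangle-f(y)$ (under the assumption, $f^*$ is $\tfrac1L$-strongly convex). For $\Omega'\subseteq\Omega$, $(\mathcal{D}(\Omega'))$ is the problem $\sup\{-f^*(q):q\in\mathbb{R}^m,\ |A^*q(x)|\le1\ \forall x\in\Omega'\}$. The sets $\Omega_k\subseteq\Omega$ are those produced by the exchange algorithm (given $\Omega_0$; $q_k$ solves $(\mathcal{D}(\Omega_k))$; $X_k$ is the set of local maximizers $x\in\Omega$ of $|A^*q_k|$ with $|A^*q_k(x)|>1$; $\Omega_{k+1}=\Omega_k\cup X_k$); in particular $q_k$ is the solution of $(\mathcal{D}(\Omega_k))$. *)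

(* Defs.v *)
From Stdlib Require Import Reals Classical ClassicalEpsilon.
From mathcomp Require Import all_boot.
Set Implicit Arguments. Unset Strict Implicit. Unset Printing Implicit Defensive.
Open Scope R_scope.

Definition vec (n : nat) := 'I_n -> R.
Definition vzero (n : nat) : vec n := fun _ => 0.
Definition vadd (n : nat) (x y : vec n) : vec n := fun i => x i + y i.
Definition vsub (n : nat) (x y : vec n) : vec n := fun i => x i - y i.
Definition dot (n : nat) (x y : vec n) : R := \big[Rplus/0]_(i < n) (x i * y i).
Definition norm2 (n : nat) (x : vec n) : R := sqrt (dot x x).

Definition is_open (d : nat) (U : vec d -> Prop) : Prop :=
  forall x, U x -> exists r, 0 < r /\ forall y, norm2 (vsub y x) < r -> U y.
Definition is_closed (d : nat) (K : vec d -> Prop) : Prop :=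
  is_open (fun x => ~ K x).
Definition is_bounded (d : nat) (K : vec d -> Prop) : Prop :=
  exists M, forall x, K x -> norm2 x <= M.
(* Heine-Borel: compact = closed and bounded in R^d *)
Definition is_compact (d : nat) (K : vec d -> Prop) : Prop :=
  is_closed K /\ is_bounded K.

Definition continuous_on (d : nat) (Om : vec d -> Prop) (a : vec d -> R) : Prop :=
  forall x, Om x -> forall eps, 0 < eps -> exists delta, 0 < delta /\
    forall y, Om y -> norm2 (vsub y x) < delta -> Rabs (a y - a x) < eps.

(* C_0(Omega): continuous functions on Omega vanishing at the boundary of
   Omega and at infinity: for every eps > 0 there is a compact K contained in
   Omega with |a| < eps on Omega \ K. *)
Definition C0 (d : nat) (Om : vec d -> Prop) (a : vec d -> R) : Prop :=
  continuous_on Om a /\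
  forall eps, 0 < eps -> exists K : vec d -> Prop,
    is_compact K /\ (forall x, K x -> Om x) /\
    (forall x, Om x -> ~ K x -> Rabs (a x) < eps).

Definition Astar (d m : nat) (a : 'I_m -> vec d -> R) (q : vec m) (x : vec d) : R :=
  \big[Rplus/0]_(i < m) (q i * a i x).

Definition convex_fun (m : nat) (f : vec m -> R) : Prop :=
  forall x y t, 0 <= t <= 1 ->
    f (fun i => t * x i + (1 - t) * y i) <= t * f x + (1 - t) * f y.
Definition bounded_below (m : nat) (f : vec m -> R) : Prop :=
  exists c, forall y, c <= f y.

Definition has_gradient (m : nat) (f : vec m -> R) (x g : vec m) : Prop :=
  forall eps, 0 < eps -> exists delta, 0 < delta /\
    forall h, norm2 h < delta ->
      Rabs (f (vadd x h) - f x - dot g h) <= eps * norm2 h.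

Definition diff_Lipschitz_grad (m : nat) (f : vec m -> R) (L : R) : Prop :=
  exists g : vec m -> vec m,
    (forall x, has_gradient f x (g x)) /\
    (forall x y, norm2 (vsub (g x) (g y)) <= L * norm2 (vsub x y)).

(* extended reals R U {+oo} (enough for convex conjugates) *)
Inductive Rbar := Finite (r : R) | p_infty.
Definition Rbar_le (a b : Rbar) : Prop :=
  match a, b with
  | _, p_infty => True
  | p_infty, Finite _ => False
  | Finite x, Finite y => x <= y
  end.
(* real part; +oo is sent to 0 (only used on finite values) *)
Definition Rbar_real (a : Rbar) : R :=
  match a with Finite x => x | p_infty => 0 end.

(* convex conjugate f^*(q) = sup_y <q,y> - f(y) in R U {+oo} *)
Definition conj_set (m : nat) (f : vec m -> R) (q : vec m) : R -> Prop :=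
  fun r => exists y, r = dot q y - f y.

Lemma conj_set_inhabited (m : nat) (f : vec m -> R) (q : vec m) :
  exists r, conj_set f q r.
Proof. exists (dot q (@vzero m) - f (@vzero m)). exists (@vzero m). reflexivity. Qed.

Definition fstar (m : nat) (f : vec m -> R) (q : vec m) : Rbar :=
  match excluded_middle_informative (bound (conj_set f q)) with
  | left H => Finite (proj1_sig (completeness _ H (conj_set_inhabited f q)))
  | right _ => p_infty
  end.

(* the problem (D(Omega')) : sup { -f^*(q) : |A^* q(x)| <= 1 for all x in Omega' } *)
Definition feasible (d m : nat) (a : 'I_m -> vec d -> R) (Om' : vec d -> Prop)
  (q : vec m) : Prop :=
  forall x, Om' x -> Rabs (Astar a q x) <= 1.
Definition solves_D (d m : nat) (f : vec m -> R) (a : 'I_m -> vec d -> R)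
  (Om' : vec d -> Prop) (q : vec m) : Prop :=
  feasible a Om' q /\
  forall p, feasible a Om' p -> Rbar_le (fstar f q) (fstar f p).

Definition local_max_abs (d m : nat) (a : 'I_m -> vec d -> R) (Om : vec d -> Prop)
  (q : vec m) (x : vec d) : Prop :=
  Om x /\ exists r, 0 < r /\
    forall y, Om y -> norm2 (vsub y x) < r ->
      Rabs (Astar a q y) <= Rabs (Astar a q x).

Definition Xset (d m : nat) (a : 'I_m -> vec d -> R) (Om : vec d -> Prop)
  (q : vec m) : vec d -> Prop :=
  fun x => local_max_abs a Om q x /\ Rabs (Astar a q x) > 1.

Definition exchange_sequence (d m : nat) (f : vec m -> R) (a : 'I_m -> vec d -> R)
  (Om : vec d -> Prop) (Oms : nat -> vec d -> Prop) (qs : nat -> vec m) : Prop :=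
  (forall x, Oms O x -> Om x) /\
  (forall k, solves_D f a (Oms k) (qs k)) /\
  (forall k x, Oms (S k) x <-> (Oms k x \/ Xset a Om (qs k) x)).

Definition is_minimizer (m : nat) (f : vec m -> R) (qbar : vec m) : Prop :=
  forall q, Rbar_le (fstar f qbar) (fstar f q).

(* Main.v *)
From HB Require Import structures.
Require Import Defs.
From Stdlib Require Import Reals Lra Ranalysis1 FunctionalExtensionality ClassicalEpsilon.
From mathcomp Require Import all_boot.
Set Implicit Arguments.
Open Scope R_scope.
Lemma Rplus_assoc' : associative Rplus. Proof. intros x y z; ring. Qed.
HB.instance Definition _ := Monoid.isComLaw.Build R 0 Rplus Rplus_assoc' Rplus_comm Rplus_0_l.

Lemma sumD n (F G : 'I_n -> R) :
  \big[Rplus/0]_(i<n) (F i + G i) = \big[Rplus/0]_(i<n) F i + \big[Rplus/0]_(i<n) G i.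
Proof. by rewrite big_split. Qed.

Lemma sumZ n c (F : 'I_n -> R) :
  \big[Rplus/0]_(i<n) (c * F i) = c * \big[Rplus/0]_(i<n) F i.
Proof.
induction n as [|n IH].
- rewrite !big_ord0; ring.
- rewrite !big_ord_recr /=.
  rewrite (IH (fun i => F (widen_ord (leqnSn n) i))). by rewrite Rmult_plus_distr_l.
Qed.

Lemma sum_ge0 n (F : 'I_n -> R) : (forall i, 0 <= F i) -> 0 <= \big[Rplus/0]_(i<n) F i.
Proof.
induction n as [|n IH]; intros H.
- rewrite big_ord0; lra.
- rewrite big_ord_recr /=.
  apply Rplus_le_le_0_compat; [apply (IH (fun i => F (widen_ord (leqnSn n) i)) (fun i => H _))|apply H].
Qed.

Definition scal n (t : R) (x : vec n) : vec n := fun i => t * x i.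
Arguments scal {n}.

Lemma dot_sym n (x y : vec n) : dot x y = dot y x.
Proof. unfold dot. apply eq_bigr => i _. ring. Qed.

Lemma dot_addl n (x y z : vec n) : dot (vadd x y) z = dot x z + dot y z.
Proof. unfold dot. rewrite -sumD. apply eq_bigr => i _. unfold vadd. ring. Qed.

Lemma dot_subl n (x y z : vec n) : dot (vsub x y) z = dot x z - dot y z.
Proof.
unfold dot. replace (\big[Rplus/0]_(i < n) (x i * z i) - \big[Rplus/0]_(i < n) (y i * z i))
 with (\big[Rplus/0]_(i < n) (x i * z i) + (-1) * \big[Rplus/0]_(i < n) (y i * z i)) by ring.
rewrite -sumZ -sumD. apply eq_bigr => i _. unfold vsub. ring. Qed.

Lemma dot_scall n t (x z : vec n) : dot (scal t x) z = t * dot x z.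
Proof. unfold dot. rewrite -sumZ. apply eq_bigr => i _. unfold scal. ring. Qed.

Lemma dot_subr n (x y z : vec n) : dot z (vsub x y) = dot z x - dot z y.
Proof. rewrite (dot_sym z) (dot_sym z x) (dot_sym z y). apply dot_subl. Qed.

Lemma dot_scalr n t (x z : vec n) : dot z (scal t x) = t * dot z x.
Proof. rewrite (dot_sym z) (dot_sym z x). apply dot_scall. Qed.

Lemma dot_ge0 n (x : vec n) : 0 <= dot x x.
Proof. apply sum_ge0 => i. apply Rle_0_sqr. Qed.

Lemma dot_zerol n (x : vec n) : dot (@vzero n) x = 0.
Proof. replace (@vzero n) with (scal 0 x). rewrite dot_scall; ring.
apply functional_extensionality => i; unfold scal, vzero; ring. Qed.

Lemma norm2_sq n (x : vec n) : norm2 x * norm2 x = dot x x.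
Proof. unfold norm2. apply sqrt_sqrt, dot_ge0. Qed.

Lemma norm2_ge0 n (x : vec n) : 0 <= norm2 x.
Proof. apply sqrt_pos. Qed.

Lemma norm2_scal n t (x : vec n) : norm2 (scal t x) = Rabs t * norm2 x.
Proof.
unfold norm2. rewrite dot_scall dot_scalr -Rmult_assoc sqrt_mult_alt.
- change (t * t) with (Rsqr t). rewrite sqrt_Rsqr_abs. reflexivity.
- apply Rle_0_sqr.
Qed.

Lemma CS n (x y : vec n) : dot x y <= norm2 x * norm2 y.
Proof.
set A := dot x x. set B := dot y y. set D := dot x y.
assert (Q : forall t, 0 <= A - 2 * t * D + t * t * B).
{ intro t. pose proof (dot_ge0 (vsub x (scal t y))).
  rewrite !dot_subl !dot_subr !dot_scall !dot_scalr (dot_sym y x) in H.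
  unfold A, B, D. lra. }
pose proof (dot_ge0 x) as HA. pose proof (dot_ge0 y) as HB. fold A B in HA, HB.
destruct (Req_dec B 0) as [HB0|HB0].
- assert (D <= 0).
  { destruct (Rle_dec D 0) as [h|h]; auto. exfalso.
    specialize (Q ((A + 1) / (2 * D))). rewrite HB0 in Q.
    replace (2 * ((A + 1) / (2 * D)) * D) with (A + 1) in Q by (field; lra). lra. }
  pose proof (norm2_ge0 x). pose proof (norm2_ge0 y). nra.
- specialize (Q (D / B)).
  assert (D * D <= A * B).
  { replace (A - 2 * (D / B) * D + D / B * (D / B) * B) with ((A * B - D * D) / B) in Q by (field; lra).
    assert (0 < B) by lra.
    destruct (Rle_dec (D*D) (A*B)); auto. exfalso.
    assert ((A * B - D * D) / B < 0). { apply Rdiv_neg_pos; lra. } lra. }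
  unfold norm2. rewrite <- sqrt_mult_alt by auto.
  apply Rle_trans with (Rabs D). apply Rle_abs.
  rewrite <- sqrt_Rsqr_abs. apply sqrt_le_1_alt. unfold Rsqr. fold A B D. lra.
Qed.

Lemma fstar_ub m (f : vec m -> R) q r : fstar f q = Defs.Finite r -> forall y, dot q y - f y <= r.
Proof.
unfold fstar. destruct (excluded_middle_informative _) as [H|H]; [|discriminate].
intro E. destruct (completeness _ _ _) as [r0 [ub lb]]. simpl in E. injection E as E. subst r0.
intro y. apply ub. exists y. reflexivity.
Qed.

Lemma fstar_bnd m (f : vec m -> R) q M : (forall y, dot q y - f y <= M) ->
  exists r, fstar f q = Defs.Finite r /\ r <= M.
Proof.
intro H. unfold fstar. destruct (excluded_middle_informative _) as [B|B].
- destruct (completeness _ _ _) as [r [ub lub]]. exists r; split; auto.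
  apply lub. intros x [y ->]. apply H.
- exfalso. apply B. exists M. intros x [y ->]. apply H.
Qed.

Lemma Rbar_le_fin a r : Rbar_le a (Defs.Finite r) -> exists s, a = Defs.Finite s /\ s <= r.
Proof. destruct a as [s|]; simpl; [intros; exists s; auto | tauto]. Qed.

Lemma Rabs_le_lo x b : Rabs x <= b -> - b <= x.
Proof. intro H. pose proof (Rle_abs (- x)). rewrite Rabs_Ropp in H0. lra. Qed.

Lemma eps_lemma A B N : 0 <= N -> (forall eps, 0 < eps -> A - eps * N <= B) -> A <= B.
Proof.
intros HN H. destruct (Rle_dec A B) as [h|h]; auto. exfalso.
set e := (A - B) / (2 * (N + 1)).
assert (He : 0 < e). { unfold e. apply Rdiv_lt_0_compat; lra. }
assert (E : e * (2 * (N + 1)) = A - B). { unfold e. field. lra. }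
specialize (H e He). nra.
Qed.

Lemma grad_ineq m (f : vec m -> R) g0 : convex_fun f -> has_gradient f (@vzero m) g0 ->
  forall y, f (@vzero m) + dot g0 y <= f y.
Proof.
intros Hc Hg y. set N := norm2 y.
assert (HN : 0 <= N) by apply norm2_ge0.
cut (dot g0 y <= f y - f (@vzero m)). lra.
apply (eps_lemma HN). intros eps He.
destruct (Hg eps He) as [del [Hd Hh]].
set t := Rmin 1 (del / (2 * (N + 1))).
assert (Ht0 : 0 < t). { apply Rmin_glb_lt. lra. apply Rdiv_lt_0_compat; lra. }
assert (Ht1 : t <= 1) by apply Rmin_l.
assert (Ht2 : t * N < del).
{ assert (t <= del / (2 * (N + 1))) by apply Rmin_r.
  assert (E : del / (2 * (N + 1)) * (2 * (N + 1)) = del) by (field; lra). nra. }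
specialize (Hh (scal t y)).
rewrite norm2_scal Rabs_pos_eq in Hh; [|lra]. fold N in Hh.
specialize (Hh Ht2).
replace (vadd (@vzero m) (scal t y)) with (scal t y) in Hh
  by (apply functional_extensionality => i; unfold vadd, vzero, scal; ring).
rewrite dot_scalr in Hh.
pose proof (Hc y (@vzero m) t (conj (Rlt_le _ _ Ht0) Ht1)) as Hcv.
replace (fun i => t * y i + (1 - t) * @vzero m i) with (scal t y) in Hcv
  by (apply functional_extensionality => i; unfold vzero, scal; ring).
apply Rabs_le_lo in Hh.
apply Rmult_le_reg_l with t; auto. nra.
Qed.

Lemma psi_deriv m (f : vec m -> R) g y t : (forall x, has_gradient f x (g x)) ->
  derivable_pt_lim (fun s => f (scal s y)) t (dot (g (scal t y)) y).
Proof.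
intros Hg eps He. set N := norm2 y.
assert (HN : 0 <= N) by apply norm2_ge0.
set c := eps / (2 * (N + 1)).
assert (Hc : 0 < c) by (apply Rdiv_lt_0_compat; lra).
assert (Ec : c * (2 * (N + 1)) = eps) by (unfold c; field; lra).
destruct (Hg (scal t y) c Hc) as [d0 [Hd0 H]].
assert (Hd : 0 < d0 / (N + 1)) by (apply Rdiv_lt_0_compat; lra).
exists (mkposreal _ Hd). intros h Hh0 Hh. simpl in Hh.
assert (Ha : 0 < Rabs h) by (apply Rabs_pos_lt; auto).
specialize (H (scal h y)). rewrite norm2_scal in H. fold N in H.
assert (Hlt : Rabs h * N < d0).
{ assert (Ed : d0 / (N + 1) * (N + 1) = d0) by (field; lra). nra. }
specialize (H Hlt).
replace (vadd (scal t y) (scal h y)) with (scal (t + h) y) in H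
  by (apply functional_extensionality => i; unfold vadd, scal; ring).
rewrite dot_scalr in H.
set X := f (scal (t + h) y) - f (scal t y) - h * dot (g (scal t y)) y in H.
replace ((f (scal (t + h) y) - f (scal t y)) / h - dot (g (scal t y)) y) with (X * / h)
  by (unfold X; field; auto).
rewrite Rabs_mult Rabs_inv.
assert (Hi : 0 < / Rabs h) by (apply Rinv_0_lt_compat; auto).
assert (Ei : Rabs h * / Rabs h = 1) by (field; lra).
apply Rle_lt_trans with (c * (Rabs h * N) * / Rabs h).
- apply Rmult_le_compat_r; lra.
- replace (c * (Rabs h * N) * / Rabs h) with (c * N) by (field; lra). nra.
Qed.

Lemma poly_deriv (c K : R) t :
  derivable_pt_lim (fun s => s * c + K * (s * s)) t (c + 2 * K * t).
Proof.
intros eps He.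
set d := eps / (Rabs K + 1).
assert (Hd : 0 < d) by (apply Rdiv_lt_0_compat; pose proof (Rabs_pos K); lra).
exists (mkposreal _ Hd). intros h Hh0 Hh. simpl in Hh.
replace (((t + h) * c + K * ((t + h) * (t + h)) - (t * c + K * (t * t))) / h - (c + 2 * K * t))
  with (K * h) by (field; auto).
rewrite Rabs_mult.
assert (Ed : d * (Rabs K + 1) = eps) by (unfold d; field; pose proof (Rabs_pos K); lra).
pose proof (Rabs_pos K). pose proof (Rabs_pos h). nra.
Qed.

Lemma descent m (f : vec m -> R) g L y : (forall x, has_gradient f x (g x)) ->
  (forall x z, norm2 (vsub (g x) (g z)) <= L * norm2 (vsub x z)) -> 0 < L ->
  f y <= f (@vzero m) + dot (g (@vzero m)) y + L / 2 * dot y y.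
Proof.
intros Hg HL HL0.
set c := dot (g (@vzero m)) y. set Q := dot y y.
set phi := fun s => f (scal s y) - (s * c + L / 2 * (s * s) * Q).
set phi' := fun s => dot (g (scal s y)) y - (c + 2 * (L / 2 * Q) * s).
destruct (MVT_cor2 phi phi' 0 1 Rlt_0_1) as [c0 [E Hc0]].
{ intros s _. unfold phi, phi'.
  pose proof (derivable_pt_lim_minus _ _ s _ _ (@psi_deriv m f g y s Hg) (poly_deriv c (L / 2 * Q) s)) as D.
  unfold minus_fct in D.
  replace (fun s0 => f (scal s0 y) - (s0 * c + L / 2 * (s0 * s0) * Q))
    with (fun x => f (scal x y) - (x * c + L / 2 * Q * (x * x))); auto.
  apply functional_extensionality => x; ring. }
assert (Hp : phi' c0 <= 0).
{ unfold phi'. set N := norm2 y.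
  assert (HN : 0 <= N) by apply norm2_ge0.
  assert (EQ : N * N = Q) by apply norm2_sq.
  replace (dot (g (scal c0 y)) y - (c + 2 * (L / 2 * Q) * c0))
    with ((dot (g (scal c0 y)) y - dot (g (@vzero m)) y) - L * c0 * Q) by (unfold c; field).
  rewrite -dot_subl.
  pose proof (CS (vsub (g (scal c0 y)) (g (@vzero m))) y) as HCS. fold N in HCS.
  pose proof (HL (scal c0 y) (@vzero m)) as H1.
  replace (vsub (scal c0 y) (@vzero m)) with (scal c0 y) in H1
    by (apply functional_extensionality => i; unfold vsub, vzero, scal; ring).
  rewrite norm2_scal Rabs_pos_eq in H1; [|lra]. fold N in H1.
  assert (norm2 (vsub (g (scal c0 y)) (g (@vzero m))) * N <= L * (c0 * N) * N)
    by (apply Rmult_le_compat_r; auto).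
  nra. }
unfold phi in E.
replace (scal 1 y) with y in E
  by (apply functional_extensionality => i; unfold scal; ring).
replace (scal 0 y) with (@vzero m) in E
  by (apply functional_extensionality => i; unfold scal, vzero; ring).
fold c Q. nra.
Qed.

Lemma tri n (x z : vec n) : norm2 x <= norm2 (vsub x z) + norm2 z.
Proof.
pose proof (CS (vsub x z) z) as H.
assert (E : dot x x = dot (vsub x z) (vsub x z) + 2 * dot (vsub x z) z + dot z z).
{ rewrite !dot_subl !dot_subr (dot_sym z x). ring. }
rewrite -!norm2_sq in E.
pose proof (norm2_ge0 x). pose proof (norm2_ge0 (vsub x z)). pose proof (norm2_ge0 z).
nra.
Qed.

Theorem mainTheorem2 (d m : nat) (Om : vec d -> Prop) (a : 'I_m -> vec d -> R)
  (f : vec m -> R) (L : R) (qbar : vec m)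
  (Oms : nat -> vec d -> Prop) (qs : nat -> vec m) :
  (exists x, Om x) -> is_open Om ->
  (forall i, C0 Om (a i)) ->
  convex_fun f -> bounded_below f ->
  0 < L -> diff_Lipschitz_grad f L ->
  is_minimizer f qbar ->
  exchange_sequence f a Om Oms qs ->
  forall k : nat,
    norm2 (qs k) <=
      sqrt (2 * L * (Rbar_real (fstar f (@vzero m)) - Rbar_real (fstar f qbar)))
      + norm2 qbar.
Proof.
intros _ _ _ Hconv [cb Hcb] HL0 [g [Hg HL]] Hmin [_ [Hsol _]] k.
set g0 := g (@vzero m). set f0 := f (@vzero m).
pose proof (grad_ineq Hconv (Hg (@vzero m))) as HA. fold g0 f0 in HA.
destruct (@fstar_bnd m f (@vzero m) (- cb)) as [r00 [E00 _]].
{ intro y. rewrite dot_zerol. specialize (Hcb y). lra. }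
destruct (@fstar_bnd m f g0 (- f0)) as [r0 [E0 Hr0]].
{ intro y. specialize (HA y). lra. }
destruct (@Rbar_le_fin _ _ (eq_ind _ (fun z => Rbar_le (fstar f qbar) z) (Hmin g0) _ E0))
  as [rb [Eb Hrb]].
destruct (Hsol k) as [_ Hopt].
assert (Hfeas : feasible a (Oms k) (@vzero m)).
{ intros x _. unfold Astar, vzero. rewrite (sumZ 0 (fun i => a i x)) Rmult_0_l Rabs_R0. lra. }
destruct (@Rbar_le_fin _ _ (eq_ind _ (fun z => Rbar_le (fstar f (qs k)) z) (Hopt _ Hfeas) _ E00))
  as [rk [Ek Hrk]].
assert (Hbk : rb <= rk).
{ pose proof (Hmin (qs k)) as H. rewrite Eb Ek in H. exact H. }
assert (HC : forall q r, fstar f q = Defs.Finite r ->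
   dot (vsub q g0) (vsub q g0) <= 2 * L * (r + f0)).
{ intros q r Eq. set D := dot (vsub q g0) (vsub q g0).
  set y := scal (1 / L) (vsub q g0).
  pose proof (@fstar_ub m f q r Eq y) as H1.
  pose proof (@descent m f g L y Hg HL HL0) as H2. fold g0 f0 in H2.
  assert (E1 : dot q y - dot g0 y = 1 / L * D).
  { rewrite -dot_subl /y dot_scalr. reflexivity. }
  assert (E2 : dot y y = 1 / L * (1 / L) * D).
  { rewrite /y dot_scall dot_scalr. unfold D. rewrite Rmult_assoc. reflexivity. }
  assert (HD : 0 <= D) by apply dot_ge0.
  assert (H3 : 1 / L * D - L / 2 * (1 / L * (1 / L) * D) - f0 <= r) by (rewrite E2 in H2; lra).
  replace (1 / L * D - L / 2 * (1 / L * (1 / L) * D)) with (D / (2 * L)) in H3 by (field; lra).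
  assert (E3 : D / (2 * L) * (2 * L) = D) by (field; lra).
  nra. }
pose proof (HC _ _ Eb) as Hb. pose proof (HC _ _ Ek) as Hk.
assert (Hb0 : norm2 (vsub qbar g0) = 0).
{ unfold norm2. pose proof (dot_ge0 (vsub qbar g0)).
  replace (dot (vsub qbar g0) (vsub qbar g0)) with 0 by nra. apply sqrt_0. }
assert (Hg0 : norm2 g0 <= norm2 qbar).
{ pose proof (tri g0 qbar) as T.
  replace (vsub g0 qbar) with (scal (-1) (vsub qbar g0)) in T
    by (apply functional_extensionality => i; unfold scal, vsub; ring).
  rewrite norm2_scal Hb0 in T. lra. }
rewrite E00 Eb. simpl.
pose proof (tri (qs k) g0) as T.
assert (Hs : norm2 (vsub (qs k) g0) <= sqrt (2 * L * (r00 - rb))).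
{ apply sqrt_le_1_alt. nra. }
lra.
Qed.
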